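(* Let $\mathbf{s}_1,\dots,\mathbf{s}_l\in\mathbb{Q}^n$, let $\mathcal P\subseteq\mathbb{R}^n$ be the convex hull of $\bigcup_{i=1}^l(\mathbf{s}_i+\mathbb{R}_{\le0}^n)$ and $P=\mathcal P\cap\mathbb{Q}^n$. Then $$K\{\mathbf{X};P\}=\bigcap_{i=1}^l K\{\mathbf{X};\mathbf{s}_i\}.$$
   Context: $K$ is a field complete for a discrete valuation $\mathrm{val}$. For $\mathbf{r}\in\mathbb{Q}^n$, $\mathrm{val}_{\mathbf{r}}(a\mathbf{X}^\alpha)=\mathrm{val}(a)-\mathbf{r}\cdot\alpha$, and $K\{\mathbf{X};\mathbf{r}\}$ is the set of power series $\sum_{\alpha\in\mathbb{N}^n}a_\alpha\mathbf{X}^\alpha$ ($a_\alpha\in K$) with $\mathrm{val}_{\mathbf{r}}(a_\alpha\mathbf{X}^\alpha)\to+\infty$ as $|\alpha|\to\infty$. For $P\subseteq\mathbb{Q}^n$, $K\{\mathbf{X};P\}$ is the set of power series $\sum a_\alpha\mathbf{X}^\alpha$ such that for every $\mathbf{r}\in P$, $\mathrm{val}_{\mathbf{r}}(a_\alpha\mathbf{X}^\alpha)\to+\infty$ as $|\alpha|\to\infty$. *)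

(* Defs.v *)
From HB Require Import structures.
From mathcomp Require Import all_boot all_order all_algebra.
From mathcomp Require Import reals.
Set Implicit Arguments. Unset Strict Implicit. Unset Printing Implicit Defensive.
Import Order.TTheory GRing.Theory Num.Theory.
Local Open Scope ring_scope.

(* A (normalized) discrete valuation on a field K, given by its values on
   nonzero elements; by convention val 0 = +oo, so val is never consulted at 0. *)
Definition is_discrete_valuation (K : fieldType) (val : K -> int) : Prop :=
  [/\ (forall x y : K, x != 0 -> y != 0 -> val (x * y) = val x + val y),
      (forall x y : K, x != 0 -> y != 0 -> x + y != 0 ->
          Num.min (val x) (val y) <= val (x + y))
    & (exists pi : K, pi != 0 /\ val pi = 1)].

(* "val x >= M", with the convention val 0 = +oo *)
Definition val_ge (K : fieldType) (val : K -> int) (x : K) (M : int) : Prop :=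
  x = 0 \/ M <= val x.

Definition val_complete (K : fieldType) (val : K -> int) : Prop :=
  forall u : nat -> K,
    (forall M : int, exists N : nat, forall m p : nat, (N <= m)%N -> (N <= p)%N ->
        val_ge val (u m - u p) M) ->
    exists l : K, forall M : int, exists N : nat, forall m : nat, (N <= m)%N ->
        val_ge val (u m - l) M.

Definition multi_deg (n : nat) (alpha : 'I_n -> nat) : nat := (\sum_(k < n) alpha k)%N.

(* val_r (a X^alpha) = val a - r . alpha  (as a rational; +oo when a = 0) *)
(* a power series is a coefficient family f : (N^n) -> K;
   in_Kr val r f  <->  f belongs to K{X; r} *)
Definition in_Kr (K : fieldType) (val : K -> int) (n : nat) (r : 'I_n -> rat)
    (f : ('I_n -> nat) -> K) : Prop :=
  forall M : rat, exists N : nat, forall alpha : 'I_n -> nat,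
    (N <= multi_deg alpha)%N ->
    f alpha = 0 \/ M <= (val (f alpha))%:~R - \sum_(k < n) r k * (alpha k)%:R.

Definition in_KP (K : fieldType) (val : K -> int) (n : nat) (P : ('I_n -> rat) -> Prop)
    (f : ('I_n -> nat) -> K) : Prop :=
  forall r, P r -> in_Kr val r f.

Definition conv_hull (R : realType) (n : nat) (A : ('I_n -> R) -> Prop) (x : 'I_n -> R) : Prop :=
  exists (m : nat) (w : 'I_m -> R) (p : 'I_m -> ('I_n -> R)),
    [/\ (forall j, 0 <= w j), \sum_(j < m) w j = 1, (forall j, A (p j))
      & (forall k, x k = \sum_(j < m) w j * p j k)].

Definition union_orthants (R : realType) (n l : nat) (s : 'I_l -> 'I_n -> rat)
    (y : 'I_n -> R) : Prop :=
  exists i : 'I_l, forall k, y k <= ratr (s i k).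

Definition Ppoly (R : realType) (n l : nat) (s : 'I_l -> 'I_n -> rat) (r : 'I_n -> rat) : Prop :=
  conv_hull (@union_orthants R n l s) (fun k => ratr (r k)).

(* Main.v *)
Require Import Defs.
From HB Require Import structures.
From mathcomp Require Import all_boot all_order all_algebra.
From mathcomp Require Import reals.
Import Order.TTheory GRing.Theory Num.Theory.
Local Open Scope ring_scope.

Theorem mainTheorem12 (R : realType) (K : fieldType) (val : K -> int)
  (hval : is_discrete_valuation val) (hcomp : val_complete val)
  (n l : nat) (s : 'I_l -> 'I_n -> rat) (f : ('I_n -> nat) -> K) :
  in_KP val (@Ppoly R n l s) f <-> (forall i : 'I_l, in_Kr val (s i) f).
Proof.
split.
  move=> H i; apply: H.
  exists 1%N, (fun _ => 1), (fun _ k => ratr (s i k)); split => //.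
  - by rewrite big_ord1.
  - by move=> j; exists i => k.
  - by move=> k; rewrite big_ord1 mul1r.
move=> H r [m [w [p [w0 w1 Ap px]]]] M.
have [N HN] := fin_all_exists (fun i => H i M).
have [I HI] := fin_all_exists Ap.
exists (\max_(i < l) N i)%N => alpha Hal.
case: (eqVneq (f alpha) 0) => [->|fa0]; [by left|right].
set v := val (f alpha).
have Hj : forall j, M <= v%:~R - \sum_k s (I j) k * (alpha k)%:R.
  move=> j; have := HN (I j) alpha.
  have -> : (N (I j) <= multi_deg alpha)%N.
    by apply: leq_trans Hal; apply: leq_bigmax.
  by case=> // => e; rewrite e eqxx in fa0.
rewrite -(ler_rat R) rmorphB /= ratr_int rmorph_sum /=.
under eq_bigr => k _ do rewrite rmorphM /= ratr_nat px.
have -> : ratr M = \sum_j w j * (ratr M : R) by rewrite -mulr_suml w1 mul1r.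
have -> : (v%:~R : R) - \sum_k (\sum_j w j * p j k) * (alpha k)%:R
   = \sum_j w j * (v%:~R - \sum_k p j k * (alpha k)%:R).
  under [RHS]eq_bigr => j _ do rewrite mulrBr mulr_sumr.
  rewrite sumrB -mulr_suml w1 mul1r exchange_big /=.
  congr (_ - _); apply: eq_bigr => k _; rewrite mulr_suml.
  by apply: eq_bigr => j _; rewrite mulrA.
apply: ler_sum => j _; apply: ler_wpM2l; first exact: w0.
apply: le_trans (_ : ratr (v%:~R - \sum_k s (I j) k * (alpha k)%:R) <= _).
  by rewrite ler_rat.
rewrite rmorphB /= ratr_int rmorph_sum /= lerB //.
apply: ler_sum => k _; rewrite rmorphM /= ratr_nat.
by apply: ler_wpM2r; [exact: ler0n | exact: HI].
Qed.
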